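(* For $\omega>0$ small, there exist smooth functions $K_2,K_1,K_0$ on $\mathbb{R}$ such that, with \[ K=\partial_y^4-2\partial_y^2+K_2\partial_y^2+K_1\partial_y+K_0+1, \] one has the operator identity $U M_+M_-=KU$, and for all $k\ge0$, on $\mathbb{R}$, \[ |\partial_y^kK_2|+|\partial_y^kK_1|+|\partial_y^kK_0|\lesssim \omega e^{-(\kappa-\alpha)|y|}. \]
   Context: For $\omega\ge0$, $Q_\omega(y)=\sqrt{4/(1+a_\omega\cosh 2y)}$, $a_\omega=\sqrt{1+\tfrac{16}{3}\omega}$, and $M_+=-\partial_y^2+1+\tfrac{\omega}{3}Q_\omega^4$, $M_-=-\partial_y^2+1-\omega Q_\omega^4$. For $\omega\in(0,\omega_1)$ ($\omega_1>0$ small), $\alpha=\alpha(\omega)>0$ is smooth with $\alpha=\tfrac89\omega+O(\omega^2)$, $\lambda=1-\alpha^2$, $\kappa=\sqrt{2-\alpha^2}$, and $W_1,W_2$ are smooth real functions of $(\omega,y)$, even in $y$, satisfying $M_+W_1=\lambda W_2$, $M_-W_2=\lambda W_1$ and, for $j=1,2$, all $k\ge0$, on $\mathbb{R}$: $|\partial_y^kW_j|\lesssim\omega^ke^{-\alpha|y|}+\omega e^{-|y|}$, $|\partial_y^k(W_1-W_2)|\lesssim\omega e^{-\kappa|y|}$, $|W_j-e^{-\alpha|y|}|\lesssim\omega e^{-\alpha|y|}$ (these are the internal-mode eigenfunctions of the transformed linearized problem of the cubic-quintic NLS around $Q_\omega$). In particular $W_2>0$; set $U=\partial_y-W_2'/W_2$.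 The notation $\lesssim$ means $\le C\,\cdot$ with $C$ independent of $\omega$ and $y$ (possibly depending on $k$). *)

(* Defs.v *)
From Stdlib Require Import Reals Lra List.
From Coquelicot Require Import Coquelicot.
Open Scope R_scope.

Definition smooth (f : R -> R) : Prop :=
  forall (n : nat) (x : R), ex_derive (Derive_n f n) x.

(** Iterated partial derivatives of g : R -> R -> R (variables (w, y)):
    true = derivative in w, false = derivative in y; applied right to left. *)
Fixpoint pder (l : list bool) (g : R -> R -> R) : R -> R -> R :=
  match l with
  | nil => g
  | b :: l' =>
      let h := pder l' g in
      if b then (fun w y => Derive (fun w' => h w' y) w)
      else (fun w y => Derive (fun y' => h w y') y)
  end.

Definition smooth2_on (w1 : R) (g : R -> R -> R) : Prop :=
  forall (l : list bool) (w y : R), 0 < w < w1 ->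
    ex_derive (fun w' => pder l g w' y) w /\
    ex_derive (fun y' => pder l g w y') y /\
    continuity_2d_pt (pder l g) w y.

Definition smooth_on_interval (w1 : R) (g : R -> R) : Prop :=
  forall (n : nat) (w : R), 0 < w < w1 -> ex_derive (Derive_n g n) w.

Definition a_om (w : R) : R := sqrt (1 + 16 / 3 * w).
Definition Q (w y : R) : R := sqrt (4 / (1 + a_om w * cosh (2 * y))).

Definition Mp_op (w : R) (f : R -> R) : R -> R :=
  fun y => - Derive_n f 2 y + f y + w / 3 * (Q w y) ^ 4 * f y.
Definition Mm_op (w : R) (f : R -> R) : R -> R :=
  fun y => - Derive_n f 2 y + f y - w * (Q w y) ^ 4 * f y.

Definition Uop (W2 : R -> R) (f : R -> R) : R -> R :=
  fun y => Derive f y - (Derive W2 y / W2 y) * f y.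

Definition Kop (K2 K1 K0 : R -> R) (f : R -> R) : R -> R :=
  fun y => Derive_n f 4 y - 2 * Derive_n f 2 y + K2 y * Derive_n f 2 y
           + K1 y * Derive f y + K0 y * f y + f y.

(* Main.v *)
Require Import Defs.
From Stdlib Require Import Reals Lra Lia FunctionalExtensionality List ClassicalEpsilon.
From Coquelicot Require Import Coquelicot.
Open Scope R_scope.

Ltac eta := repeat match goal with |- context [fun x => ?f x] => change (fun x => f x) with f end.

Lemma smooth_ex f : smooth f -> forall x, ex_derive f x.
Proof. intros H x. exact (H 0%nat x). Qed.

Lemma smooth_exdn f : smooth f -> forall k x, ex_derive_n f k x.
Proof. intros H [|k] x; simpl; [exact I| apply H]. Qed.

Lemma smooth_loc f : smooth f -> forall n x,
  locally x (fun y => forall k, (k <= n)%nat -> ex_derive_n f k y).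
Proof. intros H n x. apply filter_forall. intros y k _. apply smooth_exdn, H. Qed.

Lemma Dn_S f n x : Derive_n f (S n) x = Derive_n (Derive f) n x.
Proof.
  replace (S n) with (n + 1)%nat by lia. rewrite <- (Derive_n_comp f n 1 x). reflexivity.
Qed.

Lemma smooth_ext f g : (forall x, f x = g x) -> smooth f -> smooth g.
Proof.
  intros E H n x. apply ex_derive_ext with (Derive_n f n).
  intro t. apply Derive_n_ext. exact E. apply H.
Qed.

Lemma smooth_D f : smooth f -> smooth (Derive f).
Proof.
  intros H n x. apply ex_derive_ext with (Derive_n f (S n)).
  intro t. apply Dn_S. apply H.
Qed.

Lemma smooth_Dn f m : smooth f -> smooth (Derive_n f m).
Proof.
  intros H; induction m. exact H. apply smooth_D. exact IHm.
Qed.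

Lemma smooth_const c : smooth (fun _ => c).
Proof. intros n x. exact (ex_derive_n_const c (S n) x). Qed.

Lemma Dn_plus f g n x : smooth f -> smooth g ->
  Derive_n (fun y => f y + g y) n x = Derive_n f n x + Derive_n g n x.
Proof. intros. apply Derive_n_plus; apply smooth_loc; auto. Qed.

Lemma Dn_minus f g n x : smooth f -> smooth g ->
  Derive_n (fun y => f y - g y) n x = Derive_n f n x - Derive_n g n x.
Proof. intros. apply Derive_n_minus; apply smooth_loc; auto. Qed.

Inductive Gc (h : R -> R) : (R -> R) -> Prop :=
| Gc_s f : smooth f -> Gc h f
| Gc_i : Gc h (fun x => / h x)
| Gc_p f g : Gc h f -> Gc h g -> Gc h (fun x => f x + g x)
| Gc_m f g : Gc h f -> Gc h g -> Gc h (fun x => f x * g x)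
| Gc_e f g : (forall x, f x = g x) -> Gc h f -> Gc h g.

Lemma Gc_step h : smooth h -> (forall x, h x <> 0) -> forall f, Gc h f ->
  (forall x, ex_derive f x) /\ Gc h (Derive f).
Proof.
  intros Hh Hn f G; induction G.
  - split. apply smooth_ex; auto. apply Gc_s, smooth_D; auto.
  - split.
    + intro x. eexists. apply is_derive_inv. apply Derive_correct, smooth_ex, Hh. apply Hn.
    + apply Gc_e with (fun x => (-1 * Derive h x) * ((/ h x) * (/ h x))).
      * intro x. rewrite (is_derive_unique _ _ _ (is_derive_inv h x _ (Derive_correct _ _ (smooth_ex h Hh x)) (Hn x))).
        field. apply Hn.
      * apply Gc_m. apply Gc_m. apply Gc_s, smooth_const. apply Gc_s, smooth_D, Hh.
        apply Gc_m; apply Gc_i.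
  - destruct IHG1 as [E1 D1]; destruct IHG2 as [E2 D2]. split.
    + intro x. auto_derive; repeat split; eta; auto.
    + apply Gc_e with (fun x => Derive f x + Derive g x). intro x. rewrite Derive_plus; auto.
      apply Gc_p; auto.
  - destruct IHG1 as [E1 D1]; destruct IHG2 as [E2 D2]. split.
    + intro x. auto_derive; repeat split; eta; auto.
    + apply Gc_e with (fun x => Derive f x * g x + f x * Derive g x). intro x. rewrite Derive_mult; auto.
      apply Gc_p; apply Gc_m; auto.
  - destruct IHG as [E1 D1]. split.
    + intro x. apply ex_derive_ext with f; auto.
    + apply Gc_e with (Derive f). intro x. apply Derive_ext; auto. auto.
Qed.

Lemma Gc_smooth h : smooth h -> (forall x, h x <> 0) -> forall f, Gc h f -> smooth f.
Proof.
  intros Hh Hn f G.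
  assert (forall n, Gc h (Derive_n f n)).
  { induction n. exact G. apply (Gc_step h Hh Hn _ IHn). }
  intros n x. apply (Gc_step h Hh Hn _ (H n)).
Qed.

Lemma smooth_plus f g : smooth f -> smooth g -> smooth (fun x => f x + g x).
Proof. intros. apply (Gc_smooth (fun _ => 1)). apply smooth_const. intros; lra.
  apply Gc_p; apply Gc_s; auto. Qed.
Lemma smooth_mult f g : smooth f -> smooth g -> smooth (fun x => f x * g x).
Proof. intros. apply (Gc_smooth (fun _ => 1)). apply smooth_const. intros; lra.
  apply Gc_m; apply Gc_s; auto. Qed.
Lemma smooth_scal c f : smooth f -> smooth (fun x => c * f x).
Proof. intros. apply smooth_mult; auto. apply smooth_const. Qed.
Lemma smooth_opp f : smooth f -> smooth (fun x => - f x).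
Proof. intros. apply smooth_ext with (fun x => -1 * f x). intros; ring. apply smooth_scal; auto. Qed.
Lemma smooth_minus f g : smooth f -> smooth g -> smooth (fun x => f x - g x).
Proof. intros. apply smooth_plus; auto. apply smooth_opp; auto. Qed.
Lemma smooth_inv h : smooth h -> (forall x, h x <> 0) -> smooth (fun x => / h x).
Proof. intros. apply (Gc_smooth h); auto. apply Gc_i. Qed.

Lemma Dn_exp n x : Derive_n exp n x = exp x.
Proof.
  revert x; induction n; intro x. reflexivity.
  simpl. rewrite (Derive_ext _ exp x IHn). apply is_derive_unique, is_derive_exp.
Qed.

Lemma smooth_exp : smooth exp.
Proof. intros n x. apply ex_derive_ext with exp. intro; symmetry; apply Dn_exp.
  eexists; apply is_derive_exp. Qed.

Lemma Dn_expc c n x : Derive_n (fun y => exp (c * y)) n x = c ^ n * exp (c * x).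
Proof. rewrite Derive_n_comp_scal. rewrite Dn_exp; auto. apply smooth_loc, smooth_exp. Qed.

Lemma smooth_expc c : smooth (fun y => exp (c * y)).
Proof. intros n x. apply ex_derive_ext with (fun y => c ^ n * exp (c * y)).
  intro; symmetry; apply Dn_expc. auto_derive; auto. Qed.

Lemma Dn_mult_S f g n x : smooth f -> smooth g ->
  Derive_n (fun y => f y * g y) (S n) x =
  Derive_n (fun y => Derive f y * g y) n x + Derive_n (fun y => f y * Derive g y) n x.
Proof.
  intros Hf Hg. rewrite Dn_S. rewrite <- Dn_plus.
  apply Derive_n_ext. intro t. apply Derive_mult; apply smooth_ex; auto.
  apply smooth_mult; auto. apply smooth_D; auto.
  apply smooth_mult; auto. apply smooth_D; auto.
Qed.

Lemma Dn0 f x : Derive_n f 0 x = f x.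
Proof. reflexivity. Qed.

Definition sm (D : R -> Prop) (F : R -> R -> R) := forall w, D w -> smooth (F w).
Definition bupto (D : R -> Prop) (F e : R -> R -> R) (k : nat) :=
  forall j, (j <= k)%nat -> exists C, forall w y, D w -> Rabs (Derive_n (F w) j y) <= C * e w y.
Definition bnd (D : R -> Prop) (F e : R -> R -> R) :=
  forall k, exists C, forall w y, D w -> Rabs (Derive_n (F w) k y) <= C * e w y.
Definition nneg (D : R -> Prop) (e : R -> R -> R) := forall w y, D w -> 0 <= e w y.

Lemma bnd_upto D F e k : bnd D F e -> bupto D F e k.
Proof. intros H j _. apply H. Qed.

Lemma bupto_D D F e k : bupto D F e (S k) -> bupto D (fun w => Derive (F w)) e k.
Proof.
  intros H j Hj. destruct (H (S j)) as [C HC]. lia. exists C. intros w y Dw.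
  rewrite <- Dn_S. apply HC; auto.
Qed.

Lemma bupto_le D F e k m : (m <= k)%nat -> bupto D F e k -> bupto D F e m.
Proof. intros Hm H j Hj. apply H. lia. Qed.

Lemma abs_le_pos x C e : 0 <= e -> Rabs x <= C * e -> Rabs x <= Rabs C * e.
Proof. intros He H. apply Rle_trans with (1 := H). apply Rmult_le_compat_r; auto. apply Rle_abs. Qed.

Lemma prod_upto D e1 e2 k : nneg D e1 -> nneg D e2 -> forall F G,
  sm D F -> sm D G -> bupto D F e1 k -> bupto D G e2 k ->
  exists C, forall w y, D w -> Rabs (Derive_n (fun y => F w y * G w y) k y) <= C * (e1 w y * e2 w y).
Proof.
  intros N1 N2. induction k; intros F G SF SG BF BG.
  - destruct (BF 0%nat) as [C1 H1]; auto. destruct (BG 0%nat) as [C2 H2]; auto.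
    exists (Rabs C1 * Rabs C2). intros w y Dw. simpl.
    specialize (H1 w y Dw). specialize (H2 w y Dw). simpl in H1, H2.
    apply abs_le_pos in H1; [|apply N1; auto]. apply abs_le_pos in H2; [|apply N2; auto].
    rewrite Rabs_mult. replace (Rabs C1 * Rabs C2 * (e1 w y * e2 w y)) with ((Rabs C1 * e1 w y) * (Rabs C2 * e2 w y)) by ring.
    apply Rmult_le_compat; auto; apply Rabs_pos.
  - destruct (IHk (fun w => Derive (F w)) G) as [Ca Ha].
    { intros w Dw. apply smooth_D, SF; auto. } auto. apply bupto_D; auto. apply bupto_le with (S k); auto.
    destruct (IHk F (fun w => Derive (G w))) as [Cb Hb]. auto.
    { intros w Dw. apply smooth_D, SG; auto. } apply bupto_le with (S k); auto. apply bupto_D; auto.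
    exists (Ca + Cb). intros w y Dw. rewrite Dn_mult_S; try (apply SF || apply SG); auto.
    eapply Rle_trans. apply Rabs_triang. rewrite Rmult_plus_distr_r.
    apply Rplus_le_compat. apply Ha; auto. apply Hb; auto.
Qed.

Lemma bnd_prod D e1 e2 F G : nneg D e1 -> nneg D e2 ->
  sm D F -> sm D G -> bnd D F e1 -> bnd D G e2 ->
  bnd D (fun w y => F w y * G w y) (fun w y => e1 w y * e2 w y).
Proof.
  intros. intro k. apply prod_upto; auto; apply bnd_upto; auto.
Qed.

Lemma bnd_plus D e F G : sm D F -> sm D G -> bnd D F e -> bnd D G e ->
  bnd D (fun w y => F w y + G w y) e.
Proof.
  intros SF SG BF BG k. destruct (BF k) as [C1 H1]. destruct (BG k) as [C2 H2].
  exists (C1 + C2). intros w y Dw. rewrite Dn_plus; auto.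
  eapply Rle_trans. apply Rabs_triang. rewrite Rmult_plus_distr_r.
  apply Rplus_le_compat; auto.
Qed.

Lemma bnd_mono D e1 e2 F c : nneg D e1 -> (forall w y, D w -> e1 w y <= c * e2 w y) ->
  bnd D F e1 -> bnd D F e2.
Proof.
  intros N H B k. destruct (B k) as [C HC]. exists (Rabs C * c). intros w y Dw.
  apply Rle_trans with (Rabs C * e1 w y). apply abs_le_pos. apply N; auto. apply HC; auto.
  rewrite Rmult_assoc. apply Rmult_le_compat_l. apply Rabs_pos. auto.
Qed.

Lemma bnd_scal D e F s M : nneg D e -> (forall w, D w -> Rabs (s w) <= M) ->
  bnd D F e -> bnd D (fun w y => s w * F w y) e.
Proof.
  intros N Hs B k. destruct (B k) as [C HC]. exists (M * Rabs C). intros w y Dw.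
  rewrite Derive_n_scal_l. rewrite Rabs_mult.
  rewrite Rmult_assoc. apply Rmult_le_compat. apply Rabs_pos. apply Rabs_pos. auto.
  apply abs_le_pos; auto.
Qed.

Lemma bnd_shift D e F m : bnd D F e -> bnd D (fun w => Derive_n (F w) m) e.
Proof.
  intros B k. destruct (B (k + m)%nat) as [C HC]. exists C. intros w y Dw.
  rewrite Derive_n_comp. apply HC; auto.
Qed.

Lemma bnd_ext D e F G : (forall w y, D w -> F w y = G w y) -> bnd D F e -> bnd D G e.
Proof.
  intros E B k. destruct (B k) as [C HC]. exists C. intros w y Dw.
  rewrite <- (Derive_n_ext (F w)); auto.
Qed.

Lemma sm_ext D F G : (forall w y, D w -> F w y = G w y) -> sm D F -> sm D G.
Proof. intros E S w Dw. apply smooth_ext with (F w); auto. Qed.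

Lemma smooth_invpow F n : smooth F -> (forall x, F x <> 0) -> smooth (fun y => / F y ^ n).
Proof.
  intros HF Hn. apply smooth_ext with (fun y => (/ F y) ^ n).
  intro; apply pow_inv.
  induction n. simpl. apply smooth_const.
  apply smooth_ext with (fun y => / F y * (/ F y) ^ n). intro; reflexivity.
  apply smooth_mult; auto. apply smooth_inv; auto.
Qed.

Lemma Derive_invpow F n y : smooth F -> F y <> 0 ->
  Derive (fun y => / F y ^ S n) y = - INR (S n) * (Derive F y * / F y ^ S (S n)).
Proof.
  intros HF Hn.
  assert (H1 := is_derive_pow F (S n) y _ (Derive_correct _ _ (smooth_ex F HF y))).
  assert (H2 := is_derive_inv (fun y => F y ^ S n) y _ H1 (pow_nonzero _ _ Hn)).
  rewrite (is_derive_unique _ _ _ H2). simpl pred. simpl. field.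
  split; auto. apply pow_nonzero; auto.
Qed.

Lemma inv_upto D F rho c0 : sm D F -> bnd D F rho -> (forall w y, D w -> 0 < rho w y) -> 0 < c0 ->
  (forall w y, D w -> c0 * rho w y <= F w y) ->
  forall k n, bupto D (fun w y => / F w y ^ S n) (fun w y => / rho w y ^ S n) k.
Proof.
  intros SF BF Pr Pc LF.
  assert (Fpos : forall w y, D w -> 0 < F w y).
  { intros. apply Rlt_le_trans with (c0 * rho w y). apply Rmult_lt_0_compat; auto. auto. }
  assert (Fnz : forall w, D w -> forall y, F w y <> 0). { intros. apply Rgt_not_eq, Fpos; auto. }
  induction k; intros n j Hj.
  - assert (j = 0%nat) by lia. subst j. exists ((/ c0) ^ S n). intros w y Dw. rewrite Dn0.
    rewrite Rabs_pos_eq. 2: { left. apply Rinv_0_lt_compat, pow_lt, Fpos; auto. }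
    rewrite pow_inv, <- Rinv_mult, <- Rpow_mult_distr.
    apply Rinv_le_contravar. apply pow_lt. apply Rmult_lt_0_compat; auto.
    apply pow_incr. split. left; apply Rmult_lt_0_compat; auto. apply Rle_trans with (c0 * rho w y); [right; ring | auto].
  - destruct (Nat.le_gt_cases j k) as [Hjk|Hjk]. apply IHk; auto.
    assert (j = S k) by lia. subst j.
    destruct (prod_upto D rho (fun w y => / rho w y ^ S (S n)) k) with
      (F := fun w => Derive (F w)) (G := fun w y => / F w y ^ S (S n)) as [C HC].
    { intros w y Dw. left; auto. }
    { intros w y Dw. left. apply Rinv_0_lt_compat, pow_lt; auto. }
    { intros w Dw. apply smooth_D, SF; auto. }
    { intros w Dw. apply smooth_invpow. apply SF; auto. apply Fnz; auto. }
    { apply bupto_D. apply bnd_upto; auto. }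
    { apply IHk. }
    exists (INR (S n) * C). intros w y Dw.
    rewrite Dn_S. rewrite (Derive_n_ext _ (fun y => - INR (S n) * (Derive (F w) y * / F w y ^ S (S n)))).
    2: { intro t. apply Derive_invpow. apply SF; auto. apply Fnz; auto. }
    rewrite Derive_n_scal_l. rewrite Rabs_mult. rewrite Rabs_Ropp, Rabs_pos_eq by apply pos_INR.
    specialize (HC w y Dw).
    replace (INR (S n) * C * / rho w y ^ S n) with (INR (S n) * (C * (rho w y * / rho w y ^ S (S n)))).
    apply Rmult_le_compat_l. apply pos_INR. auto.
    assert (Hr: rho w y <> 0) by (apply Rgt_not_eq; apply Pr; auto).
    simpl. field. split; auto. apply pow_nonzero; auto.
Qed.

Lemma bnd_inv D F rho c0 : sm D F -> bnd D F rho -> (forall w y, D w -> 0 < rho w y) -> 0 < c0 ->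
  (forall w y, D w -> c0 * rho w y <= F w y) -> forall n,
  bnd D (fun w y => / F w y ^ S n) (fun w y => / rho w y ^ S n).
Proof. intros. intro k. apply (inv_upto D F rho c0 H H0 H1 H2 H3 k n k). lia. Qed.

Lemma exp_small B e a y0 : 0 < B -> 0 < e -> 0 < a -> exists Y, y0 <= Y /\ B * exp (- (2 * a) * Y) < e.
Proof.
  intros HB He Ha. exists (Rmax y0 (- ln (e / B) / (2 * a) + 1)). split. apply Rmax_l.
  assert (H1 : - (2 * a) * Rmax y0 (- ln (e / B) / (2 * a) + 1) < ln (e / B)).
  { assert (H2 := Rmax_r y0 (- ln (e / B) / (2 * a) + 1)).
    apply Rle_lt_trans with (- (2 * a) * (- ln (e / B) / (2 * a) + 1)).
    apply Rmult_le_compat_neg_l. lra. auto.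
    replace (- (2 * a) * (- ln (e / B) / (2 * a) + 1)) with (ln (e / B) - 2 * a) by (field; lra). lra. }
  apply exp_increasing in H1. rewrite exp_ln in H1 by (apply Rdiv_lt_0_compat; auto).
  apply Rmult_lt_compat_l with (r := B) in H1; auto.
  replace (B * (e / B)) with e in H1 by (field; lra). exact H1.
Qed.

Lemma ode_upper (W W1 W2d : R -> R) (a k M B : R) : 0 < a -> 0 < k -> 0 <= M ->
  (forall y, is_derive W y (W1 y)) -> (forall y, is_derive W1 y (W2d y)) ->
  (forall y, 0 <= y -> Rabs (W2d y - a ^ 2 * W y) <= M * exp (- k * y)) ->
  (forall y, 0 <= y -> Rabs (W1 y + a * W y) <= B * exp (- a * y)) ->
  forall y, 0 <= y -> W1 y + a * W y <= M / (a + k) * exp (- k * y).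
Proof.
  intros Ha Hk HM D1 D2 Hr Hg y0 Hy0.
  set (c := M / (a + k)).
  assert (Hc : 0 <= c). { unfold c. apply Rdiv_le_0_compat; lra. }
  set (phi := fun t => exp (- a * t) * (W1 t + a * W t) - c * exp (- (a + k) * t)).
  set (df := fun t => exp (- a * t) * (W2d t - a ^ 2 * W t) + M * exp (- (a + k) * t)).
  assert (Dphi : forall t, is_derive phi t (df t)).
  { intro t. unfold phi, df.
    assert (E1 : Derive W t = W1 t) by (apply is_derive_unique; auto).
    assert (E2 : Derive W1 t = W2d t) by (apply is_derive_unique; auto).
    auto_derive.
    - repeat split; eexists; eauto.
    - eta. rewrite E1, E2. unfold c. field. lra. }
  assert (Mono : forall Y, y0 <= Y -> phi y0 <= phi Y).
  { intros Y HY. destruct (MVT_gen phi y0 Y df) as [t [Ht Eq]].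
    - intros; apply Dphi.
    - intros. apply continuity_pt_filterlim. apply (ex_derive_continuous phi). eexists; apply Dphi.
    - rewrite Rmin_left in Ht by auto. rewrite Rmax_right in Ht by auto.
      assert (0 <= df t).
      { unfold df. specialize (Hr t ltac:(lra)).
        apply Rabs_le_between in Hr. destruct Hr as [Hr _].
        assert (exp (- a * t) * (W2d t - a ^ 2 * W t) >= exp (- a * t) * (- (M * exp (- k * t)))).
        { apply Rle_ge, Rmult_le_compat_l. left; apply exp_pos. lra. }
        replace (exp (- a * t) * - (M * exp (- k * t))) with (- (M * exp (- (a + k) * t))) in H.
        lra. replace (- (a + k) * t) with (- a * t + - k * t) by ring. rewrite exp_plus. ring. }
      assert (0 <= df t * (Y - y0)) by (apply Rmult_le_pos; lra). lra. }
  destruct (Rle_or_lt (W1 y0 + a * W y0) (c * exp (- k * y0))) as [H|H]. exact H.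
  exfalso.
  assert (P0 : 0 < phi y0).
  { unfold phi. replace (- (a + k) * y0) with (- a * y0 + - k * y0) by ring. rewrite exp_plus.
    assert (0 < exp (- a * y0) * (W1 y0 + a * W y0 - c * exp (- k * y0))).
    apply Rmult_lt_0_compat. apply exp_pos. lra. nra. }
  assert (Bnd : forall Y, 0 <= Y -> phi Y <= B * exp (- (2 * a) * Y)).
  { intros Y HY. unfold phi. specialize (Hg Y HY).
    assert (exp (- a * Y) * (W1 Y + a * W Y) <= exp (- a * Y) * (B * exp (- a * Y))).
    { apply Rmult_le_compat_l. left; apply exp_pos. apply Rle_trans with (2 := Hg). apply Rle_abs. }
    replace (exp (- a * Y) * (B * exp (- a * Y))) with (B * exp (- (2 * a) * Y)) in H0.
    assert (0 <= c * exp (- (a + k) * Y)) by (apply Rmult_le_pos; auto; left; apply exp_pos). lra.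
    replace (- (2 * a) * Y) with (- a * Y + - a * Y) by ring. rewrite exp_plus. ring. }
  destruct (Rle_or_lt B 0) as [HB|HB].
  - assert (phi y0 <= B * exp (- (2 * a) * y0)) by (apply Bnd; auto).
    assert (0 <= exp (- (2 * a) * y0)) by (left; apply exp_pos). nra.
  - destruct (exp_small B (phi y0) a y0 HB P0 Ha) as [Y [HY1 HY2]].
    assert (phi y0 <= phi Y) by (apply Mono; auto).
    assert (phi Y <= B * exp (- (2 * a) * Y)) by (apply Bnd; lra). lra.
Qed.

Lemma ode_decay (W W1 W2d : R -> R) (a k M B : R) : 0 < a -> 0 < k -> 0 <= M ->
  (forall y, is_derive W y (W1 y)) -> (forall y, is_derive W1 y (W2d y)) ->
  (forall y, 0 <= y -> Rabs (W2d y - a ^ 2 * W y) <= M * exp (- k * y)) ->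
  (forall y, 0 <= y -> Rabs (W1 y + a * W y) <= B * exp (- a * y)) ->
  forall y, 0 <= y -> Rabs (W1 y + a * W y) <= M / (a + k) * exp (- k * y).
Proof.
  intros Ha Hk HM D1 D2 Hr Hg y Hy. apply Rabs_le. split.
  - assert (H := ode_upper (fun t => - W t) (fun t => - W1 t) (fun t => - W2d t) a k M B Ha Hk HM).
    assert (- W1 y + a * - W y <= M / (a + k) * exp (- k * y)).
    { apply H; auto.
      - intro t. exact (is_derive_opp _ _ _ (D1 t)).
      - intro t. exact (is_derive_opp _ _ _ (D2 t)).
      - intros t Ht. replace (- W2d t - a ^ 2 * - W t) with (- (W2d t - a ^ 2 * W t)) by ring.
        rewrite Rabs_Ropp; auto.
      - intros t Ht. replace (- W1 t + a * - W t) with (- (W1 t + a * W t)) by ring.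
        rewrite Rabs_Ropp; auto. }
    lra.
  - apply (ode_upper W W1 W2d a k M B); auto.
Qed.

Lemma Dn_succ f n y : Derive (Derive_n f n) y = Derive_n f (S n) y.
Proof. reflexivity. Qed.
Lemma Dn1 f y : Derive f y = Derive_n f 1 y.
Proof. reflexivity. Qed.

Ltac exsolve := repeat split; repeat match goal with
  | |- ex_derive (fun x => Derive_n ?F ?k x) _ => apply (smooth_ex (Derive_n F k)); apply smooth_Dn; assumption
  | |- ex_derive _ _ => apply smooth_ex; assumption end.

Ltac setatoms := repeat match goal with |- context [Derive_n ?F ?k] =>
   let a := fresh "at" in set (a := Derive_n F k) end.
Ltac unsetatoms := repeat match goal with x := Derive_n _ _ |- _ => subst x end.

Ltac dsolve f P g := apply is_derive_unique; setatoms; auto_derive; unsetatoms;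
  [ exsolve | eta; rewrite ?Dn_succ, ?(Dn1 f), ?(Dn1 P), ?(Dn1 g); ring ].

Section Id.
Variables (w : R) (P g f : R -> R).
Hypotheses (HP : smooth P) (Hg : smooth g) (Hf : smooth f).

Definition MMg (F : R -> R) := fun y => - Derive_n F 2 y + F y - w * P y * F y.
Definition MPg (F : R -> R) := fun y => - Derive_n F 2 y + F y + w / 3 * P y * F y.
Definition Uo (F : R -> R) := fun y => Derive F y - g y * F y.

Definition MM0 y := - Derive_n f 2 y + f y - w * P y * f y.
Definition MM1 y := - Derive_n f 3 y + Derive_n f 1 y - w * (Derive_n P 1 y * f y + P y * Derive_n f 1 y).
Definition MM2 y := - Derive_n f 4 y + Derive_n f 2 y - w * (Derive_n P 2 y * f y + 2 * Derive_n P 1 y * Derive_n f 1 y + P y * Derive_n f 2 y).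
Definition MM3 y := - Derive_n f 5 y + Derive_n f 3 y - w * (Derive_n P 3 y * f y + 3 * Derive_n P 2 y * Derive_n f 1 y + 3 * Derive_n P 1 y * Derive_n f 2 y + P y * Derive_n f 3 y).

Lemma MM_D1 : Derive (MMg f) = MM1.
Proof. apply functional_extensionality; intro y. unfold MMg, MM1. dsolve f P g. Qed.
Lemma MM_D2 : Derive_n (MMg f) 2 = MM2.
Proof. apply functional_extensionality; intro y. change (Derive (Derive (MMg f)) y = MM2 y).
  rewrite MM_D1. unfold MM1, MM2. dsolve f P g. Qed.

Definition FF y := - MM2 y + MM0 y + w / 3 * P y * MM0 y.
Lemma MP_eq : MPg (MMg f) = FF.
Proof. apply functional_extensionality; intro y. unfold MPg, FF. rewrite MM_D2. reflexivity. Qed.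

Lemma FF_D y : Derive FF y = - MM3 y + MM1 y + w / 3 * (Derive_n P 1 y * MM0 y + P y * MM1 y).
Proof. unfold FF, MM0, MM1, MM2, MM3. dsolve f P g. Qed.

Definition U0 y := Derive_n f 1 y - g y * f y.
Definition U1 y := Derive_n f 2 y - Derive_n g 1 y * f y - g y * Derive_n f 1 y.
Definition U2 y := Derive_n f 3 y - Derive_n g 2 y * f y - 2 * Derive_n g 1 y * Derive_n f 1 y - g y * Derive_n f 2 y.
Definition U3 y := Derive_n f 4 y - Derive_n g 3 y * f y - 3 * Derive_n g 2 y * Derive_n f 1 y
   - 3 * Derive_n g 1 y * Derive_n f 2 y - g y * Derive_n f 3 y.
Definition U4 y := Derive_n f 5 y - Derive_n g 4 y * f y - 4 * Derive_n g 3 y * Derive_n f 1 y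
   - 6 * Derive_n g 2 y * Derive_n f 2 y - 4 * Derive_n g 1 y * Derive_n f 3 y - g y * Derive_n f 4 y.

Lemma U_eq : Uo f = U0.
Proof. apply functional_extensionality; intro y. reflexivity. Qed.
Lemma U_D1 : Derive U0 = U1.
Proof. apply functional_extensionality; intro y. unfold U0, U1. dsolve f P g. Qed.
Lemma U_D2 : Derive U1 = U2.
Proof. apply functional_extensionality; intro y. unfold U1, U2. dsolve f P g. Qed.
Lemma U_D3 : Derive U2 = U3.
Proof. apply functional_extensionality; intro y. unfold U2, U3. dsolve f P g. Qed.
Lemma U_D4 : Derive U3 = U4.
Proof. apply functional_extensionality; intro y. unfold U3, U4. dsolve f P g. Qed.


Definition K2f y := 2 * w / 3 * P y + 4 * Derive_n g 1 y.
Definition K1f y := 8 * w / 3 * Derive_n P 1 y + 6 * Derive_n g 2 y + 4 * g y * Derive_n g 1 y.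
Definition a0f y := (1 + w / 3 * P y) * (1 - w * P y) + w * Derive_n P 2 y.
Definition b2f y := -2 + 2 * w / 3 * P y + 4 * Derive_n g 1 y.
Definition K0f y := 2 * w * Derive_n P 2 y + a0f y - 2 * w * g y * Derive_n P 1 y + 4 * Derive_n g 3 y
   + 2 * b2f y * Derive_n g 1 y + K1f y * g y - 1.
Definition cf y := (w / 3 * Derive_n P 1 y * (1 - w * P y) + (1 + w / 3 * P y) * (- w * Derive_n P 1 y) + w * Derive_n P 3 y)
   - g y * a0f y + Derive_n g 4 y + b2f y * Derive_n g 2 y + K1f y * Derive_n g 1 y + (K0f y + 1) * g y.

Lemma ident y : Uo (MPg (MMg f)) y - Kop K2f K1f K0f (Uo f) y = cf y * f y.
Proof.
  unfold Uo at 1. rewrite MP_eq. rewrite FF_D. rewrite U_eq. unfold Kop.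
  change (Derive_n U0 4 y) with (Derive (Derive (Derive (Derive U0))) y).
  change (Derive_n U0 2 y) with (Derive (Derive U0) y).
  rewrite U_D1, U_D2, U_D3, U_D4.
  unfold cf, K0f. unfold U0, U1, U2, U3, U4, FF, MM0, MM1, MM2, MM3, K2f, a0f, b2f.
  unfold K1f. field.
Qed.

End Id.

Lemma pder_false (W : R -> R -> R) w n y : Derive_n (W w) n y = pder (repeat false n) W w y.
Proof.
  revert y; induction n; intro y. reflexivity.
  simpl. apply Derive_ext. intro t. apply IHn.
Qed.

Lemma sm2_smooth w1 W w : smooth2_on w1 W -> 0 < w < w1 -> smooth (W w).
Proof.
  intros H Hw n y. apply ex_derive_ext with (fun y' => pder (repeat false n) W w y').
  intro t. symmetry. apply pder_false. apply (H (repeat false n) w y Hw).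
Qed.

Lemma bnd_const D c : bnd D (fun _ _ => c) (fun _ _ => 1).
Proof.
  intros [|k]. exists (Rabs c). intros. rewrite Dn0. lra.
  exists 0. intros. rewrite Derive_n_const. rewrite Rabs_R0. lra.
Qed.

Lemma bnd_scalw D e F s : nneg D e -> bnd D F e -> bnd D (fun w y => s w * F w y) (fun w y => Rabs (s w) * e w y).
Proof.
  intros N B k. destruct (B k) as [C HC]. exists (Rabs C). intros w y Dw.
  rewrite Derive_n_scal_l. rewrite Rabs_mult.
  replace (Rabs C * (Rabs (s w) * e w y)) with (Rabs (s w) * (Rabs C * e w y)) by ring.
  apply Rmult_le_compat_l. apply Rabs_pos. apply abs_le_pos; auto.
Qed.

Lemma sm_const D c : sm D (fun _ _ => c).
Proof. intros w _. apply smooth_const. Qed.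
Lemma sm_plus D F G : sm D F -> sm D G -> sm D (fun w y => F w y + G w y).
Proof. intros A B w Dw. apply smooth_plus; auto. Qed.
Lemma sm_mult D F G : sm D F -> sm D G -> sm D (fun w y => F w y * G w y).
Proof. intros A B w Dw. apply smooth_mult; auto. Qed.
Lemma sm_scal D F s : sm D F -> sm D (fun w y => s w * F w y).
Proof. intros A w Dw. apply smooth_scal; auto. Qed.
Lemma sm_Dn D F m : sm D F -> sm D (fun w => Derive_n (F w) m).
Proof. intros A w Dw. apply smooth_Dn; auto. Qed.

Lemma ric_step (G H : R -> R) (a : R) : smooth G -> smooth H ->
  (forall t, Derive G t = a - G t * G t + H t) -> forall k y,
  Derive_n (Derive G) (S k) y = -2 * Derive_n (fun t => Derive G t * G t) k y + Derive_n H (S k) y.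
Proof.
  intros SG SH E k y. rewrite Dn_S.
  rewrite (Derive_n_ext (Derive (Derive G)) (fun t => -2 * (Derive G t * G t) + Derive H t)).
  - rewrite Dn_plus. rewrite Derive_n_scal_l. rewrite Dn_S. reflexivity.
    apply smooth_scal, smooth_mult; auto. apply smooth_D; auto. apply smooth_D; auto.
  - intro t. rewrite (Derive_ext _ (fun t => a - G t * G t + H t)) by auto.
    apply is_derive_unique. auto_derive.
    + repeat split; apply smooth_ex; auto.
    + eta. ring.
Qed.

Definition hP w y := 1 + a_om w * ((exp (2 * y) + exp ((-2) * y)) / 2).
Definition PP w y := Q w y ^ 4.

Lemma a_om_bnd w : 0 < w <= 1 -> 1 <= a_om w <= 3.
Proof.
  intros Hw. unfold a_om. split.
  - apply Rle_trans with (sqrt 1); [rewrite sqrt_1; lra| apply sqrt_le_1_alt; lra].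
  - assert (H := sqrt_pos (1 + 16 / 3 * w)). assert (H2 := sqrt_sqrt (1 + 16 / 3 * w) ltac:(lra)).
    set (s := sqrt (1 + 16 / 3 * w)) in *. assert (s * s <= 9) by lra.
    destruct (Rle_lt_dec s 3); auto. nra.
Qed.

Lemma exp_abs_ge c y : 0 <= c -> exp (c * y) <= exp (c * Rabs y) /\ exp ((- c) * y) <= exp (c * Rabs y).
Proof.
  intros Hc. split.
  - destruct (Rle_lt_dec 0 y). rewrite Rabs_pos_eq; lra.
    rewrite Rabs_left by lra. destruct (Req_dec c 0). subst; rewrite !Rmult_0_l; lra.
    left; apply exp_increasing. nra.
  - destruct (Rle_lt_dec 0 y). rewrite Rabs_pos_eq by lra. destruct (Req_dec c 0). subst. replace (-0) with 0 by ring. rewrite !Rmult_0_l; lra.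
    destruct (Req_dec y 0). subst. right; f_equal; ring. left; apply exp_increasing. nra.
    rewrite Rabs_left by lra. right; f_equal; ring.
Qed.

Lemma hP_lo w y : 0 < w <= 1 -> / 2 * exp (2 * Rabs y) <= hP w y.
Proof.
  intros Hw. unfold hP. destruct (a_om_bnd w Hw).
  assert (E1 := exp_pos (2 * y)). assert (E2 := exp_pos ((-2) * y)).
  assert (exp (2 * y) + exp ((-2) * y) >= exp (2 * Rabs y)).
  { destruct (Rle_lt_dec 0 y). rewrite Rabs_pos_eq; lra.
    rewrite Rabs_left by lra. replace (2 * - y) with ((-2) * y) by ring. lra. }
  nra.
Qed.

Lemma hP_pos w y : 0 < w <= 1 -> 0 < hP w y.
Proof. intros. eapply Rlt_le_trans. 2: apply hP_lo; auto. assert (H0 := exp_pos (2 * Rabs y)). lra. Qed.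

Lemma PP_eq w y : 0 < w <= 1 -> PP w y = 16 * / hP w y ^ 2.
Proof.
  intros Hw. unfold PP, Q. assert (H := hP_pos w y Hw).
  replace (1 + a_om w * cosh (2 * y)) with (hP w y).
  2: { unfold hP, cosh. replace ((-2) * y) with (- (2 * y)) by ring. reflexivity. }
  replace (sqrt (4 / hP w y) ^ 4) with ((sqrt (4 / hP w y) ^ 2) ^ 2) by ring.
  rewrite pow2_sqrt. field. lra. apply Rlt_le, Rdiv_lt_0_compat; lra.
Qed.

Lemma hP_smooth w : smooth (hP w).
Proof.
  unfold hP. apply smooth_plus. apply smooth_const. apply smooth_scal.
  apply smooth_ext with (fun y => / 2 * exp (2 * y) + / 2 * exp ((-2) * y)). intro; field.
  apply smooth_plus; apply smooth_scal; apply smooth_expc.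
Qed.

Lemma bnd_expc D c : 0 <= c -> bnd D (fun _ y => exp (c * y)) (fun _ y => exp (c * Rabs y))
  /\ bnd D (fun _ y => exp ((- c) * y)) (fun _ y => exp (c * Rabs y)).
Proof.
  intros Hc. split; intro k; exists (c ^ k); intros w y _; rewrite Dn_expc;
  rewrite Rabs_mult, (Rabs_pos_eq (exp _)) by (left; apply exp_pos).
  - rewrite Rabs_pos_eq by (apply pow_le; auto). apply Rmult_le_compat_l. apply pow_le; auto. apply exp_abs_ge; auto.
  - rewrite <- RPow_abs, Rabs_Ropp, Rabs_pos_eq by auto. apply Rmult_le_compat_l. apply pow_le; auto. apply exp_abs_ge; auto.
Qed.

Lemma P_bnd (D : R -> Prop) : (forall w, D w -> 0 < w <= 1) ->
  sm D PP /\ bnd D PP (fun w y => exp (-4 * Rabs y)).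
Proof.
  intros HD.
  set (e2 := fun (w y : R) => exp (2 * Rabs y)).
  assert (Smh : sm D hP). { intros w _; apply hP_smooth. }
  assert (Bh : bnd D hP e2).
  { unfold hP.
    apply bnd_plus. apply sm_const.
    { intros w Dw. apply smooth_scal. apply smooth_ext with (fun y => / 2 * exp (2 * y) + / 2 * exp ((-2) * y)). intro; field.
      apply smooth_plus; apply smooth_scal; apply smooth_expc. }
    apply (bnd_mono D (fun _ _ => 1) e2 _ 1). intros w y Dw. apply Rle_0_1.
    { intros. unfold e2. assert (H1 := exp_abs_ge 2 0). rewrite Rmult_0_r, exp_0 in H1.
      assert (1 <= exp (2 * Rabs y)). { rewrite <- exp_0. destruct (Req_dec y 0). subst. rewrite Rabs_R0, Rmult_0_r. lra.
        left. apply exp_increasing. assert (0 < Rabs y) by (apply Rabs_pos_lt; auto). lra. }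
      lra. }
    apply bnd_const.
    apply bnd_ext with (fun w y => (a_om w / 2) * (exp (2 * y) + exp ((-2) * y))). intros; field.
    apply bnd_scal with 2. intros w y; unfold e2; left; apply exp_pos.
    intros w Dw. destruct (a_om_bnd w (HD w Dw)). rewrite Rabs_pos_eq; lra.
    destruct (bnd_expc D 2) as [B1 B2]. lra.
    apply bnd_plus; auto. intros w _; apply smooth_expc. intros w _; apply smooth_expc. }
  assert (Lo : forall w y, D w -> / 2 * e2 w y <= hP w y). { intros; unfold e2; apply hP_lo; auto. }
  assert (Bi := bnd_inv D hP e2 (/ 2) Smh Bh ltac:(intros; unfold e2; apply exp_pos) ltac:(lra) Lo 1).
  split.
  - intros w Dw. apply smooth_ext with (fun y => 16 * / hP w y ^ 2).
    intro y; symmetry; apply PP_eq; auto. apply smooth_scal. apply smooth_invpow. apply hP_smooth.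
    intro y; apply Rgt_not_eq, hP_pos; auto.
  - apply bnd_ext with (fun w y => 16 * / hP w y ^ 2). intros; symmetry; apply PP_eq; auto.
    apply bnd_scal with 16. intros; left; apply exp_pos. intros; rewrite Rabs_pos_eq; lra.
    apply (bnd_mono D (fun w y => / e2 w y ^ 2) _ _ 1). intros; left; apply Rinv_0_lt_compat, pow_lt; unfold e2; apply exp_pos.
    intros. unfold e2. replace (exp (2 * Rabs y) ^ 2) with (exp (4 * Rabs y)) by (simpl; rewrite Rmult_1_r, <- exp_plus; f_equal; ring).
    replace (-4 * Rabs y) with (- (4 * Rabs y)) by ring. rewrite exp_Ropp. lra.
    exact Bi.
Qed.

Lemma exp_le x y : x <= y -> exp x <= exp y.
Proof. intros [H|H]. left; apply exp_increasing; auto. subst; lra. Qed.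

Lemma pow_le1 w k : 0 <= w <= 1 -> w ^ k <= 1.
Proof. intros. rewrite <- (pow1 k). apply pow_incr. lra. Qed.

Lemma rbound (u p W ek e4 eA c12 cp w a2 : R) : 0 <= w -> Rabs (1 - a2) <= 1 ->
  Rabs u <= c12 * (w * ek) -> Rabs p <= cp * e4 -> 0 < W <= 3 / 2 * eA -> 0 <= e4 -> 0 <= eA ->
  e4 * eA <= ek ->
  Rabs ((- (1 - a2)) * u - w * p * W) <= (Rabs c12 + 2 * Rabs cp) * w * ek.
Proof.
  intros Hw Ha Hu Hp HW He4 HeA Hk.
  assert (Hek : 0 <= ek) by (apply Rle_trans with (e4 * eA); auto; apply Rmult_le_pos; auto).
  assert (T1 : Rabs ((- (1 - a2)) * u) <= Rabs c12 * (w * ek)).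
  { rewrite Rabs_mult, Rabs_Ropp. apply Rle_trans with (1 * Rabs u).
    apply Rmult_le_compat_r. apply Rabs_pos. auto. rewrite Rmult_1_l.
    apply Rle_trans with (1 := Hu). apply Rmult_le_compat_r. apply Rmult_le_pos; auto. apply Rle_abs. }
  assert (T2 : Rabs (w * p * W) <= 3 / 2 * Rabs cp * (w * ek)).
  { rewrite !Rabs_mult. rewrite (Rabs_pos_eq w) by auto. rewrite (Rabs_pos_eq W) by lra.
    assert (Hp' : Rabs p <= Rabs cp * e4).
    { apply Rle_trans with (1 := Hp). apply Rmult_le_compat_r; auto. apply Rle_abs. }
    assert (Rabs p * W <= (Rabs cp * e4) * (3 / 2 * eA)).
    { apply Rmult_le_compat; auto. apply Rabs_pos. lra. lra. }
    assert ((Rabs cp * e4) * (3 / 2 * eA) <= 3 / 2 * Rabs cp * ek).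
    { replace ((Rabs cp * e4) * (3 / 2 * eA)) with (3 / 2 * Rabs cp * (e4 * eA)) by ring.
      apply Rmult_le_compat_l; auto. assert (0 <= Rabs cp) by apply Rabs_pos. lra. }
    replace (w * Rabs p * W) with (w * (Rabs p * W)) by ring.
    replace (3 / 2 * Rabs cp * (w * ek)) with (w * (3 / 2 * Rabs cp * ek)) by ring.
    apply Rmult_le_compat_l; auto. lra. }
  unfold Rminus. eapply Rle_trans. apply Rabs_triang. rewrite Rabs_Ropp.
  assert (0 <= Rabs cp) by apply Rabs_pos. assert (0 <= w * ek) by (apply Rmult_le_pos; auto).
  assert (0 <= Rabs cp * (w * ek)) by (apply Rmult_le_pos; auto).
  replace ((Rabs c12 + 2 * Rabs cp) * w * ek) with (Rabs c12 * (w * ek) + 2 * (Rabs cp * (w * ek))) by ring.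
  unfold Rminus in T1. lra.
Qed.

Lemma gcomb (a Wd W X Wi Cg hh Ch E' : R) : 0 < W -> 0 <= X -> / W <= Wi -> 0 < a <= 1 ->
  (Rabs (Wd + a * W) <= X \/ Rabs (- Wd + a * W) <= X) ->
  Rabs (Wd / W) <= Cg -> Rabs hh <= Ch * E' -> 0 <= E' ->
  Rabs (a ^ 2 - Wd / W * (Wd / W) + hh) <= (2 + Rabs Cg) * (X * Wi) + Rabs Ch * E'.
Proof.
  intros HW HX HWi Ha Hor Hg Hh HE.
  assert (HWi0 : 0 < / W) by (apply Rinv_0_lt_compat; auto).
  assert (Cg' : Rabs (Wd / W) <= Rabs Cg) by (eapply Rle_trans; [apply Hg| apply Rle_abs]).
  assert (Hh' : Rabs hh <= Rabs Ch * E') by (eapply Rle_trans; [apply Hh| apply Rmult_le_compat_r; auto; apply Rle_abs]).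
  assert (Key : Rabs (a ^ 2 - Wd / W * (Wd / W)) <= (2 + Rabs Cg) * (X * Wi)).
  { replace (a ^ 2 - Wd / W * (Wd / W)) with ((a + Wd / W) * (a - Wd / W)) by ring.
    rewrite Rabs_mult.
    assert (G1 : Rabs (a + Wd / W) <= 1 + Rabs Cg).
    { eapply Rle_trans. apply Rabs_triang. rewrite Rabs_pos_eq by lra. lra. }
    assert (G2 : Rabs (a - Wd / W) <= 1 + Rabs Cg).
    { eapply Rle_trans. apply Rabs_triang. rewrite Rabs_Ropp, Rabs_pos_eq by lra. lra. }
    assert (X0 : 0 <= X * Wi) by (apply Rmult_le_pos; lra).
    destruct Hor as [Hp|Hm].
    - assert (Rabs (a + Wd / W) <= X * Wi).
      { replace (a + Wd / W) with ((Wd + a * W) * / W) by (field; lra).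
        rewrite Rabs_mult, (Rabs_pos_eq (/ W)) by lra. apply Rmult_le_compat; auto; try apply Rabs_pos; lra. }
      rewrite Rmult_comm. apply Rmult_le_compat; try apply Rabs_pos; lra.
    - assert (Rabs (a - Wd / W) <= X * Wi).
      { replace (a - Wd / W) with ((- Wd + a * W) * / W) by (field; lra).
        rewrite Rabs_mult, (Rabs_pos_eq (/ W)) by lra. apply Rmult_le_compat; auto; try apply Rabs_pos; lra. }
      apply Rmult_le_compat; try apply Rabs_pos; lra. }
  eapply Rle_trans. apply Rabs_triang. lra.
Qed.

Lemma sm_constw D (s : R -> R) : sm D (fun w _ => s w).
Proof. intros w _. apply smooth_const. Qed.

Ltac smt := repeat first [ assumption | match goal with H : forall m : nat, sm _ _ |- _ => apply H end
   | apply sm_constw | apply sm_plus | apply sm_mult ].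

Lemma toolWP D e4 E : nneg D e4 -> (forall c w y, D w -> Rabs (c * w) * e4 w y <= Rabs c * E w y) ->
  forall c F, bnd D F e4 -> bnd D (fun w y => (c * w) * F w y) E.
Proof.
  intros Ne4 wE c F BF. apply (bnd_mono D (fun w y => Rabs (c * w) * e4 w y) E _ (Rabs c)).
  intros w y Dw. apply Rmult_le_pos. apply Rabs_pos. apply Ne4; auto.
  intros; apply wE; auto. apply bnd_scalw; auto.
Qed.
Lemma toolCS D c F e : nneg D e -> bnd D F e -> bnd D (fun w y => c * F w y) e.
Proof. intros Ne BF. apply bnd_scal with (Rabs c); auto. intros; lra. Qed.
Lemma toolE1 D E one F : nneg D E -> (forall w y, D w -> E w y <= one w y) -> bnd D F E -> bnd D F one.
Proof. intros NE Eone BF. apply (bnd_mono D E one F 1); auto. intros; rewrite Rmult_1_l; apply Eone; auto. Qed.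
Lemma toolPO D one E F G : nneg D one -> nneg D E -> (forall w y, D w -> one w y <= 1) ->
  sm D F -> sm D G -> bnd D F one -> bnd D G E -> bnd D (fun w y => F w y * G w y) E.
Proof.
  intros N1 NE H1 SF SG BF BG. apply (bnd_mono D (fun w y => one w y * E w y) E _ 1).
  intros w y Dw; apply Rmult_le_pos; auto. intros w y Dw. rewrite Rmult_1_l.
  assert (0 <= E w y) by (apply NE; auto). assert (one w y <= 1) by auto. nra. apply bnd_prod; auto.
Qed.
Lemma toolPO' D one E F G : nneg D one -> nneg D E -> (forall w y, D w -> one w y <= 1) ->
  sm D F -> sm D G -> bnd D F E -> bnd D G one -> bnd D (fun w y => F w y * G w y) E.
Proof.
  intros N1 NE H1 SF SG BF BG. apply (bnd_mono D (fun w y => E w y * one w y) E _ 1).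
  intros w y Dw; apply Rmult_le_pos; auto. intros w y Dw. rewrite Rmult_1_l.
  assert (0 <= E w y) by (apply NE; auto). assert (one w y <= 1) by auto. nra. apply bnd_prod; auto.
Qed.

Theorem lemma3
  (w1 : R) (alpha : R -> R) (W1 W2 : R -> R -> R)
  (Hw1 : 0 < w1)
  (Halpha_smooth : smooth_on_interval w1 alpha)
  (Halpha_pos : forall w, 0 < w < w1 -> 0 < alpha w)
  (Halpha_asym : exists C, forall w, 0 < w < w1 ->
      Rabs (alpha w - 8 / 9 * w) <= C * w ^ 2)
  (HW1_smooth : smooth2_on w1 W1)
  (HW2_smooth : smooth2_on w1 W2)
  (HW1_even : forall w y, 0 < w < w1 -> W1 w (- y) = W1 w y)
  (HW2_even : forall w y, 0 < w < w1 -> W2 w (- y) = W2 w y)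
  (Heig1 : forall w y, 0 < w < w1 ->
      Mp_op w (W1 w) y = (1 - alpha w ^ 2) * W2 w y)
  (Heig2 : forall w y, 0 < w < w1 ->
      Mm_op w (W2 w) y = (1 - alpha w ^ 2) * W1 w y)
  (HW1_bd : forall k : nat, exists C, forall w y, 0 < w < w1 ->
      Rabs (Derive_n (W1 w) k y)
        <= C * (w ^ k * exp (- alpha w * Rabs y) + w * exp (- Rabs y)))
  (HW2_bd : forall k : nat, exists C, forall w y, 0 < w < w1 ->
      Rabs (Derive_n (W2 w) k y)
        <= C * (w ^ k * exp (- alpha w * Rabs y) + w * exp (- Rabs y)))
  (HW12_bd : forall k : nat, exists C, forall w y, 0 < w < w1 ->
      Rabs (Derive_n (fun z => W1 w z - W2 w z) k y)
        <= C * w * exp (- sqrt (2 - alpha w ^ 2) * Rabs y))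
  (HW1_app : exists C, forall w y, 0 < w < w1 ->
      Rabs (W1 w y - exp (- alpha w * Rabs y)) <= C * w * exp (- alpha w * Rabs y))
  (HW2_app : exists C, forall w y, 0 < w < w1 ->
      Rabs (W2 w y - exp (- alpha w * Rabs y)) <= C * w * exp (- alpha w * Rabs y)) :
  exists w0 : R, 0 < w0 /\ w0 <= w1 /\
  exists C : nat -> R,
  forall w : R, 0 < w < w0 ->
  exists K2 K1 K0 : R -> R,
    smooth K2 /\ smooth K1 /\ smooth K0 /\
    (forall f : R -> R, smooth f -> forall y : R,
        Uop (W2 w) (Mp_op w (Mm_op w f)) y = Kop K2 K1 K0 (Uop (W2 w) f) y) /\
    (forall (k : nat) (y : R),
        Rabs (Derive_n K2 k y) + Rabs (Derive_n K1 k y) + Rabs (Derive_n K0 k y)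
          <= C k * w * exp (- (sqrt (2 - alpha w ^ 2) - alpha w) * Rabs y)).
Proof.
  destruct Halpha_asym as [Ca HCa].
  destruct HW2_app as [CA HCA].
  assert (Ra := Rabs_pos Ca). assert (RA := Rabs_pos CA).
  assert (Hpa : 0 < / (2 * (Rabs Ca + 1))) by (apply Rinv_0_lt_compat; lra).
  assert (HpA : 0 < / (2 * (Rabs CA + 1))) by (apply Rinv_0_lt_compat; lra).
  set (w0 := Rmin w1 (Rmin (1/2) (Rmin (/ (2 * (Rabs Ca + 1))) (/ (2 * (Rabs CA + 1)))))).
  assert (w0pos : 0 < w0). { unfold w0; repeat apply Rmin_glb_lt; lra. }
  exists w0. split; auto. split. apply Rmin_l.
  set (D := fun w => 0 < w < w0).
  assert (Dw1 : forall w, D w -> 0 < w < w1).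
  { intros w [H1 H2]. split; auto. apply Rlt_le_trans with w0; auto. apply Rmin_l. }
  assert (Dm : forall w, D w -> w <= 1/2 /\ (Rabs Ca + 1) * w <= 1/2 /\ (Rabs CA + 1) * w <= 1/2).
  { intros w [H1 H2]. unfold w0 in H2.
    assert (A1 := Rmin_r w1 (Rmin (1/2) (Rmin (/ (2 * (Rabs Ca + 1))) (/ (2 * (Rabs CA + 1)))))).
    assert (A2 := Rmin_l (1/2) (Rmin (/ (2 * (Rabs Ca + 1))) (/ (2 * (Rabs CA + 1))))).
    assert (A3 := Rmin_r (1/2) (Rmin (/ (2 * (Rabs Ca + 1))) (/ (2 * (Rabs CA + 1))))).
    assert (A4 := Rmin_l (/ (2 * (Rabs Ca + 1))) (/ (2 * (Rabs CA + 1)))).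
    assert (A5 := Rmin_r (/ (2 * (Rabs Ca + 1))) (/ (2 * (Rabs CA + 1)))).
    assert (w < / (2 * (Rabs Ca + 1))) by lra. assert (w < / (2 * (Rabs CA + 1))) by lra.
    split. lra. split.
    - apply Rmult_lt_compat_l with (r := 2 * (Rabs Ca + 1)) in H. rewrite Rinv_r in H by lra. lra. lra.
    - apply Rmult_lt_compat_l with (r := 2 * (Rabs CA + 1)) in H0. rewrite Rinv_r in H0 by lra. lra. lra. }
  assert (D01 : forall w, D w -> 0 < w <= 1).
  { intros w Dw. destruct (Dm w Dw). destruct Dw. lra. }
  assert (Hal : forall w, D w -> 0 < alpha w <= 1).
  { intros w Dw. split. apply Halpha_pos, Dw1; auto.
    assert (H := HCa w (Dw1 w Dw)). apply Rabs_le_between in H. destruct (Dm w Dw) as [H1 [H2 H3]].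
    destruct Dw as [H4 H5]. assert (Ca * w ^ 2 <= Rabs Ca * w * w). { simpl. rewrite Rmult_1_r.
      rewrite <- Rmult_assoc. apply Rmult_le_compat_r. lra. apply Rmult_le_compat_r. lra. apply Rle_abs. }
    nra. }
  set (kap := fun w => sqrt (2 - alpha w ^ 2)).
  assert (Hk : forall w, D w -> 1 <= kap w <= 2).
  { intros w Dw. destruct (Hal w Dw). unfold kap. split.
    - apply Rle_trans with (sqrt 1); [rewrite sqrt_1; lra| apply sqrt_le_1_alt; nra].
    - assert (Hs := sqrt_pos (2 - alpha w ^ 2)). assert (H2 := sqrt_sqrt (2 - alpha w ^ 2) ltac:(nra)).
      set (s := sqrt (2 - alpha w ^ 2)) in *. destruct (Rle_lt_dec s 2); auto. nra. }
  set (eA := fun w y => exp (- alpha w * Rabs y)).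
  set (eAi := fun w y => exp (alpha w * Rabs y)).
  set (E := fun w y => w * exp (- (kap w - alpha w) * Rabs y)).
  set (one := fun (w y : R) => 1).
  set (e4 := fun (w y : R) => exp (-4 * Rabs y)).
  set (eK := fun w y => w * exp (- kap w * Rabs y)).
  assert (NeA : nneg D eA) by (intros w y _; left; apply exp_pos).
  assert (NeAi : nneg D eAi) by (intros w y _; left; apply exp_pos).
  assert (NE : nneg D E) by (intros w y Dw; apply Rmult_le_pos; [ destruct (D01 w Dw); lra | left; apply exp_pos]).
  assert (None : nneg D one) by (intros w y _; unfold one; lra).
  assert (Ne4 : nneg D e4) by (intros w y _; left; apply exp_pos).
  assert (NeK : nneg D eK) by (intros w y Dw; apply Rmult_le_pos; [ destruct (D01 w Dw); lra | left; apply exp_pos]).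
  assert (W2b : forall w y, D w -> / 2 * eA w y <= W2 w y <= 3 / 2 * eA w y).
  { intros w y Dw. assert (H := HCA w y (Dw1 w Dw)). apply Rabs_le_between in H.
    destruct (Dm w Dw) as [_ [_ H3]]. assert (H4 := exp_pos (- alpha w * Rabs y)).
    destruct (D01 w Dw). unfold eA.
    assert (CA * w * exp (- alpha w * Rabs y) <= / 2 * exp (- alpha w * Rabs y)).
    { apply Rmult_le_compat_r. lra. assert (CA <= Rabs CA) by apply Rle_abs. nra. }
    lra. }
  assert (W2pos : forall w y, D w -> 0 < W2 w y).
  { intros w y Dw. destruct (W2b w y Dw). assert (0 < eA w y) by (apply exp_pos). lra. }
  assert (SW1 : sm D W1). { intros w Dw. apply (sm2_smooth w1); auto. }
  assert (SW2 : sm D W2). { intros w Dw. apply (sm2_smooth w1); auto. }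
  assert (BW2 : bnd D W2 eA).
  { intro k. destruct (HW2_bd k) as [C HC]. exists (2 * Rabs C). intros w y Dw.
    eapply Rle_trans. apply (HC w y (Dw1 w Dw)).
    destruct (D01 w Dw). destruct (Hal w Dw).
    assert (wk := pow_le1 w k ltac:(lra)). assert (wk0 := pow_le w k ltac:(lra)).
    assert (E1 : exp (- Rabs y) <= eA w y).
    { apply exp_le. assert (0 <= Rabs y) by apply Rabs_pos. nra. }
    assert (E2 := exp_pos (- Rabs y)). assert (E3 := exp_pos (- alpha w * Rabs y)). fold (eA w y) in E3.
    assert (X : w ^ k * eA w y + w * exp (- Rabs y) <= 2 * eA w y) by nra.
    apply Rle_trans with (Rabs C * (w ^ k * eA w y + w * exp (- Rabs y))).
    apply Rmult_le_compat_r. nra. apply Rle_abs.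
    replace (2 * Rabs C * eA w y) with (Rabs C * (2 * eA w y)) by ring.
    apply Rmult_le_compat_l. apply Rabs_pos. lra. }
  destruct (P_bnd D D01) as [SP BP].
  assert (SWi : sm D (fun w y => / W2 w y)).
  { intros w Dw. apply smooth_inv. apply SW2; auto. intro y; apply Rgt_not_eq, W2pos; auto. }
  assert (BWi : bnd D (fun w y => / W2 w y) eAi).
  { apply bnd_ext with (fun w y => / W2 w y ^ 1). intros; rewrite pow_1; auto.
    apply (bnd_mono D (fun w y => / eA w y ^ 1) eAi _ 1).
    intros w y _. left. apply Rinv_0_lt_compat, pow_lt, exp_pos.
    intros w y _. rewrite pow_1. unfold eA, eAi. rewrite <- exp_Ropp. rewrite Rmult_1_l. right. f_equal. ring.
    apply (bnd_inv D W2 eA (/ 2) SW2 BW2). intros; apply exp_pos. lra.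
    intros; apply W2b; auto. }
  set (g := fun w y => Derive (W2 w) y / W2 w y).
  assert (Sg : sm D g).
  { intros w Dw. apply smooth_mult. apply smooth_D, SW2; auto. apply SWi; auto. }
  assert (Bg : bnd D g one).
  { apply bnd_ext with (fun w y => Derive_n (W2 w) 1 y * / W2 w y). intros; reflexivity.
    apply (bnd_mono D (fun w y => eA w y * eAi w y) one _ 1).
    intros w y Dw. apply Rmult_le_pos; auto.
    intros w y _. unfold eA, eAi, one. rewrite <- exp_plus. replace (- alpha w * Rabs y + alpha w * Rabs y) with 0 by ring.
    rewrite exp_0; lra.
    apply bnd_prod; auto. apply sm_Dn; auto. apply bnd_shift; auto. }
  assert (SWd : sm D (fun w y => W1 w y - W2 w y)).
  { intros w Dw. apply smooth_minus; auto. }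
  assert (B12 : bnd D (fun w y => W1 w y - W2 w y) eK).
  { intro k. destruct (HW12_bd k) as [C HC]. exists C. intros w y Dw.
    rewrite (HC w y (Dw1 w Dw)). unfold eK, kap. right; ring. }
  assert (e4E : forall w y, D w -> e4 w y <= exp (- (kap w - alpha w) * Rabs y)).
  { intros w y Dw. apply exp_le. destruct (Hk w Dw). destruct (Hal w Dw). assert (0 <= Rabs y) by apply Rabs_pos. nra. }
  assert (Eone : forall w y, D w -> E w y <= one w y).
  { intros w y Dw. unfold E, one. destruct (Hk w Dw). destruct (Hal w Dw). destruct (D01 w Dw).
    assert (exp (- (kap w - alpha w) * Rabs y) <= 1).
    { rewrite <- exp_0. apply exp_le. assert (0 <= Rabs y) by apply Rabs_pos. nra. }
    assert (0 < exp (- (kap w - alpha w) * Rabs y)) by apply exp_pos. nra. }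
  assert (wE : forall (c : R) w y, D w -> Rabs (c * w) * e4 w y <= Rabs c * E w y).
  { intros c w y Dw. rewrite Rabs_mult. rewrite (Rabs_pos_eq w) by (destruct (D01 w Dw); lra).
    unfold E. rewrite Rmult_assoc. apply Rmult_le_compat_l. apply Rabs_pos. apply Rmult_le_compat_l.
    destruct (D01 w Dw); lra. apply e4E; auto. }
  set (hh := fun w y => (- (1 - alpha w ^ 2)) * ((W1 w y - W2 w y) * / W2 w y) + (- w) * PP w y).
  assert (Shh : sm D hh).
  { apply sm_plus. apply sm_scal. apply sm_mult; auto. apply sm_scal; auto. }
  assert (Bhh : bnd D hh E).
  { apply bnd_plus. apply sm_scal. apply sm_mult; auto. apply sm_scal; auto.
    - apply bnd_scal with 1. auto.
      intros w Dw. destruct (Hal w Dw). rewrite Rabs_Ropp. rewrite Rabs_pos_eq; nra.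
      apply (bnd_mono D (fun w y => eK w y * eAi w y) E _ 1). intros w y Dw; apply Rmult_le_pos; auto.
      intros w y _. unfold eK, eAi, E. rewrite Rmult_assoc, <- exp_plus. rewrite Rmult_1_l. right. f_equal. f_equal. ring.
      apply bnd_prod; auto.
    - apply (bnd_mono D (fun w y => Rabs (- w) * e4 w y) E _ 1). intros w y _. apply Rmult_le_pos. apply Rabs_pos. left; apply exp_pos.
      intros w y Dw. replace (- w) with (-1 * w) by ring. eapply Rle_trans. apply wE; auto. rewrite Rabs_left by lra. lra.
      apply bnd_scalw; auto. }
  assert (Ric : forall w y, D w -> Derive (g w) y = alpha w ^ 2 - g w y * g w y + hh w y).
  { intros w y Dw. assert (HW := Heig2 w y (Dw1 w Dw)). unfold Mm_op in HW.
    assert (Wp := W2pos w y Dw). unfold g, hh, PP.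
    assert (SW := SW2 w Dw).
    apply is_derive_unique. set (d := Derive (W2 w)). auto_derive.
    - repeat split. apply (smooth_ex d). apply smooth_D; auto. apply smooth_ex; auto. lra.
    - subst d. eta. change (Derive (Derive (W2 w)) y) with (Derive_n (W2 w) 2 y).
      replace (Derive_n (W2 w) 2 y) with (W2 w y - w * Q w y ^ 4 * W2 w y - (1 - alpha w ^ 2) * W1 w y) by lra.
      field. lra. }
  assert (G10 : exists C, forall w y, D w -> Rabs (Derive (g w) y) <= C * E w y).
  { destruct (B12 0%nat) as [C12 H12]. destruct (BP 0%nat) as [CP HP0].
    destruct (BW2 0%nat) as [C0 H0']. destruct (BW2 1%nat) as [C1 H1'].
    destruct (Bg 0%nat) as [Cg Hg0]. destruct (Bhh 0%nat) as [Ch Hh0].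
    set (Mr := Rabs C12 + 2 * Rabs CP).
    assert (Mr0 : 0 <= Mr) by (unfold Mr; assert (H := Rabs_pos C12); assert (H' := Rabs_pos CP); lra).
    exists ((2 + Rabs Cg) * (2 * Mr) + Rabs Ch).
    intros w y Dw.
    destruct (Hal w Dw) as [a0 a1]. destruct (Hk w Dw) as [k1 k2]. destruct (D01 w Dw) as [w0' w1'].
    assert (SW := SW2 w Dw).
    assert (Rb : forall z, Rabs (Derive_n (W2 w) 2 z - alpha w ^ 2 * W2 w z) <= Mr * w * exp (- kap w * Rabs z)).
    { intro z. assert (HW := Heig2 w z (Dw1 w Dw)). unfold Mm_op in HW.
      replace (Derive_n (W2 w) 2 z - alpha w ^ 2 * W2 w z) with
        (- (1 - alpha w ^ 2) * (W1 w z - W2 w z) - w * PP w z * W2 w z) by (unfold PP; lra).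
      assert (q1 : Rabs (1 - alpha w ^ 2) <= 1) by (rewrite Rabs_pos_eq; nra).
      assert (q2 := H12 w z Dw). rewrite Dn0 in q2. unfold eK in q2.
      assert (q3 := HP0 w z Dw). rewrite Dn0 in q3.
      assert (q4 : 0 < W2 w z <= 3 / 2 * eA w z) by (split; [apply W2pos; auto | apply W2b; auto]).
      assert (q5 : e4 w z * eA w z <= exp (- kap w * Rabs z)).
      { unfold e4, eA. rewrite <- exp_plus. apply exp_le. assert (0 <= Rabs z) by apply Rabs_pos. nra. }
      unfold Mr. apply (rbound _ _ _ _ (e4 w z) (eA w z)); auto; try lra; left; apply exp_pos. }
    assert (Gr : forall z, Rabs (Derive (W2 w) z + alpha w * W2 w z) <= (Rabs C1 + Rabs C0) * exp (- alpha w * Rabs z)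
                        /\ Rabs (- Derive (W2 w) z + alpha w * W2 w z) <= (Rabs C1 + Rabs C0) * exp (- alpha w * Rabs z)).
    { intro z. assert (A1 := H1' w z Dw). assert (A0 := H0' w z Dw). rewrite Dn0 in A0.
      change (Derive_n (W2 w) 1 z) with (Derive (W2 w) z) in A1.
      apply abs_le_pos in A1; [|apply NeA; auto]. apply abs_le_pos in A0; [|apply NeA; auto].
      unfold eA in A0, A1. assert (0 < exp (- alpha w * Rabs z)) by apply exp_pos.
      assert (Rabs (alpha w * W2 w z) <= Rabs C0 * exp (- alpha w * Rabs z)).
      { rewrite Rabs_mult, Rabs_pos_eq by lra. assert (0 <= Rabs (W2 w z)) by apply Rabs_pos. nra. }
      split; eapply Rle_trans; try apply Rabs_triang; try rewrite Rabs_Ropp; lra. }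
    assert (Dz : forall z, is_derive (W2 w) z (Derive (W2 w) z)).
    { intro z. apply Derive_correct, smooth_ex; auto. }
    assert (Ddz : forall z, is_derive (Derive (W2 w)) z (Derive_n (W2 w) 2 z)).
    { intro z. apply Derive_correct, (smooth_ex (Derive (W2 w))), smooth_D; auto. }
    assert (Hor : Rabs (Derive (W2 w) y + alpha w * W2 w y) <= Mr * w * exp (- kap w * Rabs y) \/
                  Rabs (- Derive (W2 w) y + alpha w * W2 w y) <= Mr * w * exp (- kap w * Rabs y)).
    { assert (Mw : 0 <= Mr * w) by (apply Rmult_le_pos; lra).
      assert (Ck : Mr * w / (alpha w + kap w) <= Mr * w).
      { unfold Rdiv. rewrite <- (Rmult_1_r (Mr * w)) at 2. apply Rmult_le_compat_l; auto.
        rewrite <- Rinv_1. apply Rinv_le_contravar; lra. }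
      destruct (Rle_or_lt 0 y) as [Hy|Hy].
      - left. eapply Rle_trans.
        apply (ode_decay (W2 w) (Derive (W2 w)) (Derive_n (W2 w) 2) (alpha w) (kap w) (Mr * w) (Rabs C1 + Rabs C0)); auto; try lra.
        + intros t Ht. replace (exp (- kap w * t)) with (exp (- kap w * Rabs t)) by (rewrite Rabs_pos_eq; auto). apply Rb.
        + intros t Ht. replace (exp (- alpha w * t)) with (exp (- alpha w * Rabs t)) by (rewrite Rabs_pos_eq; auto). apply Gr.
        + rewrite (Rabs_pos_eq y) by auto. apply Rmult_le_compat_r; auto. left; apply exp_pos.
      - right.
        assert (H := ode_decay (fun t => W2 w (- t)) (fun t => - Derive (W2 w) (- t)) (fun t => Derive_n (W2 w) 2 (- t))
                    (alpha w) (kap w) (Mr * w) (Rabs C1 + Rabs C0) ltac:(lra) ltac:(lra) Mw).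
        assert (H' : Rabs (- Derive (W2 w) (- - y) + alpha w * W2 w (- - y)) <= Mr * w / (alpha w + kap w) * exp (- kap w * (- y))).
        { apply H; try lra.
          - intro t. auto_derive. apply smooth_ex; auto. eta. ring.
          - intro t. set (d := Derive (W2 w)). auto_derive. apply (smooth_ex d), smooth_D; auto.
            subst d. eta. change (Derive (Derive (W2 w)) (- t)) with (Derive_n (W2 w) 2 (- t)). ring.
          - intros t Ht. replace (exp (- kap w * t)) with (exp (- kap w * Rabs (- t))). apply Rb.
            rewrite Rabs_Ropp, Rabs_pos_eq; auto.
          - intros t Ht. replace (exp (- alpha w * t)) with (exp (- alpha w * Rabs (- t))). apply Gr.
            rewrite Rabs_Ropp, Rabs_pos_eq; auto. }
        rewrite Ropp_involutive in H'. eapply Rle_trans. apply H'.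
        rewrite (Rabs_left y) by auto. apply Rmult_le_compat_r; auto. left; apply exp_pos. }
    rewrite (Ric w y Dw). unfold g.
    replace ((2 + Rabs Cg) * (2 * Mr) + Rabs Ch) with ((2 + Rabs Cg) * (2 * Mr) + Rabs Ch) by ring.
    assert (Hb := gcomb (alpha w) (Derive (W2 w) y) (W2 w y) (Mr * w * exp (- kap w * Rabs y)) (2 * eAi w y)
                   Cg (hh w y) Ch (E w y) (W2pos w y Dw) ltac:(apply Rmult_le_pos; [apply Rmult_le_pos; lra| left; apply exp_pos])).
    assert (Wi : / W2 w y <= 2 * eAi w y).
    { destruct (W2b w y Dw). replace (2 * eAi w y) with (/ (/ 2 * eA w y)).
      apply Rinv_le_contravar; auto. apply Rmult_lt_0_compat. lra. apply exp_pos.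
      unfold eA, eAi. rewrite Rinv_mult, Rinv_inv, <- exp_Ropp. f_equal. f_equal. ring. }
    eapply Rle_trans. apply Hb; auto.
    { assert (q := Hg0 w y Dw). rewrite Dn0 in q. unfold one, g in q. rewrite Rmult_1_r in q. exact q. }
    { assert (q := Hh0 w y Dw). rewrite Dn0 in q. exact q. }
    assert (XE : Mr * w * exp (- kap w * Rabs y) * (2 * eAi w y) = 2 * Mr * E w y).
    { unfold eAi, E. replace (- (kap w - alpha w) * Rabs y) with (- kap w * Rabs y + alpha w * Rabs y) by ring.
      rewrite exp_plus. ring. }
    rewrite XE. right. ring. }
  set (g1 := fun w => Derive (g w)).
  assert (Sg1 : sm D g1). { intros w Dw. apply smooth_D, Sg; auto. }
  assert (G1 : bnd D g1 E).
  { assert (U : forall k, bupto D g1 E k).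
    { induction k; intros j Hj.
      - assert (j = 0%nat) by lia. subst j. destruct G10 as [C HC]. exists C. intros w y Dw. rewrite Dn0. apply HC; auto.
      - destruct (Nat.le_gt_cases j k) as [Hjk|Hjk]. apply IHk; auto.
        assert (j = S k) by lia. subst j.
        destruct (prod_upto D E one k NE None g1 g Sg1 Sg IHk (bnd_upto D g one k Bg)) as [C HC].
        destruct (Bhh (S k)) as [Ch HCh].
        exists (2 * Rabs C + Ch). intros w y Dw.
        unfold g1. rewrite (ric_step (g w) (hh w) (alpha w ^ 2) (Sg w Dw) (Shh w Dw) (fun t => Ric w t Dw)).
        assert (X1 := HC w y Dw). assert (X2 := HCh w y Dw). unfold one in X1. rewrite Rmult_1_r in X1.
        apply abs_le_pos in X1; [|apply NE; auto].
        eapply Rle_trans. apply Rabs_triang. rewrite Rabs_mult.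
        replace (Rabs (-2)) with 2 by (rewrite Rabs_left by lra; lra).
        change (fun t => Derive (g w) t * g w t) with (fun t => g1 w t * g w t). lra. }
    intro k. apply (U k k). lia. }
  assert (one1 : forall w y, D w -> one w y <= 1) by (intros; unfold one; lra).
  assert (e4one : forall w y, D w -> e4 w y <= 1).
  { intros. unfold e4. rewrite <- exp_0. apply exp_le. assert (0 <= Rabs y) by apply Rabs_pos. lra. }
  set (K2F := fun w => K2f w (PP w) (g w)).
  set (K1F := fun w => K1f w (PP w) (g w)).
  set (K0F := fun w => K0f w (PP w) (g w)).
  assert (SP1 : forall m, sm D (fun w => Derive_n (PP w) m)) by (intros; apply sm_Dn; auto).
  assert (Sg1n : forall m, sm D (fun w => Derive_n (g1 w) m)) by (intros; apply sm_Dn; auto).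
  assert (BK2 : bnd D K2F E /\ sm D K2F).
  { assert (Ex : forall w y, D w -> (2 / 3 * w) * PP w y + 4 * g1 w y = K2F w y).
    { intros w y _. unfold K2F, K2f. change (Derive_n (g w) 1 y) with (g1 w y). field. }
    split.
    - apply bnd_ext with (1 := Ex). apply bnd_plus. apply sm_scal; auto. apply sm_scal; auto.
      apply (toolWP D e4 E Ne4 wE); auto. apply toolCS; auto.
    - apply sm_ext with (1 := Ex). apply sm_plus; apply sm_scal; auto. }
  assert (BK1 : bnd D K1F E /\ sm D K1F).
  { assert (Ex : forall w y, D w -> (8 / 3 * w) * Derive_n (PP w) 1 y + 6 * Derive_n (g1 w) 1 y + 4 * (g w y * g1 w y) = K1F w y).
    { intros w y _. unfold K1F, K1f. change (Derive_n (g w) 1 y) with (g1 w y).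
      change (Derive_n (g w) 2 y) with (Derive_n (g1 w) 1 y). field. }
    split.
    - apply bnd_ext with (1 := Ex). apply bnd_plus. apply sm_plus; apply sm_scal; auto.
      apply sm_scal, sm_mult; auto.
      apply bnd_plus. apply sm_scal; auto. apply sm_scal; auto.
      apply (toolWP D e4 E Ne4 wE). apply bnd_shift; auto. apply toolCS; auto. apply bnd_shift; auto.
      apply toolCS; auto. apply (toolPO D one E); auto.
    - apply sm_ext with (1 := Ex). apply sm_plus. apply sm_plus; apply sm_scal; auto. apply sm_scal, sm_mult; auto. }
  destruct BK1 as [BK1 SK1].
  assert (BK0 : bnd D K0F E /\ sm D K0F).
  { set (b2 := fun w y => -2 + (2 / 3 * w) * PP w y + 4 * g1 w y).
    assert (Sb2 : sm D b2). { apply sm_plus. apply sm_plus. apply sm_const. apply sm_scal; auto. apply sm_scal; auto. }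
    assert (Bb2 : bnd D b2 one).
    { apply bnd_plus. apply sm_plus. apply sm_const. apply sm_scal; auto. apply sm_scal; auto.
      apply bnd_plus. apply sm_const. apply sm_scal; auto. apply bnd_const. apply (toolE1 D E one _ NE Eone), (toolWP D e4 E Ne4 wE); auto.
      apply (toolE1 D E one _ NE Eone), toolCS; auto. }
    assert (SPP : sm D (fun w y => w * (PP w y * PP w y))). { apply sm_scal, sm_mult; auto. }
    assert (BPP : bnd D (fun w y => w * (PP w y * PP w y)) e4).
    { apply (bnd_mono D (fun w y => Rabs w * (e4 w y * e4 w y)) e4 _ 1).
      intros w y Dw. apply Rmult_le_pos. apply Rabs_pos. apply Rmult_le_pos; auto.
      intros w y Dw. destruct (D01 w Dw). rewrite Rabs_pos_eq by lra. assert (X := e4one w y Dw).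
      assert (0 <= e4 w y) by (apply Ne4; auto). rewrite Rmult_1_l.
      apply Rle_trans with (1 * (e4 w y * 1)). apply Rmult_le_compat; try lra. apply Rmult_le_pos; lra.
      apply Rmult_le_compat_l; lra. lra.
      apply bnd_scalw. intros w y Dw; apply Rmult_le_pos; auto. apply bnd_prod; auto. }
    assert (SgP : sm D (fun w y => g w y * Derive_n (PP w) 1 y)) by (apply sm_mult; auto).
    assert (BgP : bnd D (fun w y => g w y * Derive_n (PP w) 1 y) e4).
    { apply (bnd_mono D (fun w y => one w y * e4 w y) e4 _ 1).
      intros w y Dw. apply Rmult_le_pos; auto. intros; unfold one; lra.
      apply bnd_prod; auto. apply bnd_shift; auto. }
    set (T1 := fun w y => (3 * w) * Derive_n (PP w) 2 y).
    set (T2 := fun w y => (- (2 / 3) * w) * PP w y).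
    set (T3 := fun w y => (- (1 / 3) * w) * (w * (PP w y * PP w y))).
    set (T4 := fun w y => (-2 * w) * (g w y * Derive_n (PP w) 1 y)).
    set (T5 := fun w y => 4 * Derive_n (g1 w) 2 y).
    set (T6 := fun w y => 2 * (b2 w y * g1 w y)).
    set (T7 := fun w y => K1F w y * g w y).
    assert (Ex : forall w y, D w -> T1 w y + T2 w y + T3 w y + T4 w y + T5 w y + T6 w y + T7 w y = K0F w y).
    { intros w y _. unfold T1, T2, T3, T4, T5, T6, T7, K0F, K0f, a0f, b2f, b2. fold (K1F w).
      change (Derive_n (g w) 1 y) with (g1 w y).
      change (Derive_n (g w) 3 y) with (Derive_n (g1 w) 2 y). field. }
    assert (s1 : sm D T1) by (apply sm_scal; exact (SP1 2%nat)).
    assert (s2 : sm D T2) by (apply sm_scal; exact SP).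
    assert (s3 : sm D T3) by (apply sm_scal; exact SPP).
    assert (s4 : sm D T4) by (apply sm_scal; exact SgP).
    assert (s5 : sm D T5) by (apply sm_scal; exact (Sg1n 2%nat)).
    assert (s6 : sm D T6) by (apply sm_scal; apply sm_mult; [exact Sb2 | exact Sg1]).
    assert (s7 : sm D T7) by (apply sm_mult; [exact SK1 | exact Sg]).
    assert (b1 : bnd D T1 E) by (apply (toolWP D e4 E Ne4 wE), bnd_shift; exact BP).
    assert (b2' : bnd D T2 E) by (apply (toolWP D e4 E Ne4 wE); exact BP).
    assert (b3 : bnd D T3 E) by (apply (toolWP D e4 E Ne4 wE); exact BPP).
    assert (b4 : bnd D T4 E) by (apply (toolWP D e4 E Ne4 wE); exact BgP).
    assert (b5 : bnd D T5 E) by (apply toolCS; [exact NE| apply bnd_shift; exact G1]).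
    assert (b6 : bnd D T6 E).
    { apply toolCS; [exact NE|]. apply (toolPO D one E); [exact None|exact NE|exact one1|exact Sb2|exact Sg1|exact Bb2|exact G1]. }
    assert (b7 : bnd D T7 E).
    { apply (toolPO' D one E); [exact None | exact NE | exact one1 | exact SK1 | exact Sg | exact BK1 | exact Bg]. }
    assert (s12 : sm D (fun w y => T1 w y + T2 w y)) by (apply sm_plus; assumption).
    assert (s13 : sm D (fun w y => T1 w y + T2 w y + T3 w y)) by (apply (sm_plus D (fun w y => T1 w y + T2 w y)); assumption).
    assert (s14 : sm D (fun w y => T1 w y + T2 w y + T3 w y + T4 w y)) by (apply (sm_plus D (fun w y => T1 w y + T2 w y + T3 w y)); assumption).
    assert (s15 : sm D (fun w y => T1 w y + T2 w y + T3 w y + T4 w y + T5 w y)) by (apply (sm_plus D (fun w y => T1 w y + T2 w y + T3 w y + T4 w y)); assumption).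
    assert (s16 : sm D (fun w y => T1 w y + T2 w y + T3 w y + T4 w y + T5 w y + T6 w y)) by (apply (sm_plus D (fun w y => T1 w y + T2 w y + T3 w y + T4 w y + T5 w y)); assumption).
    assert (s17 : sm D (fun w y => T1 w y + T2 w y + T3 w y + T4 w y + T5 w y + T6 w y + T7 w y)) by (apply (sm_plus D (fun w y => T1 w y + T2 w y + T3 w y + T4 w y + T5 w y + T6 w y)); assumption).
    split.
    - apply bnd_ext with (1 := Ex).
      apply (bnd_plus D E (fun w y => T1 w y + T2 w y + T3 w y + T4 w y + T5 w y + T6 w y) T7); try assumption.
      apply (bnd_plus D E (fun w y => T1 w y + T2 w y + T3 w y + T4 w y + T5 w y) T6); try assumption.
      apply (bnd_plus D E (fun w y => T1 w y + T2 w y + T3 w y + T4 w y) T5); try assumption.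
      apply (bnd_plus D E (fun w y => T1 w y + T2 w y + T3 w y) T4); try assumption.
      apply (bnd_plus D E (fun w y => T1 w y + T2 w y) T3); try assumption.
      apply (bnd_plus D E T1 T2); assumption.
    - apply sm_ext with (1 := Ex). exact s17. }
  destruct BK2 as [BK2 SK2]. destruct BK0 as [BK0 SK0].
  assert (KB : forall k, exists C, forall w y, D w ->
     Rabs (Derive_n (K2F w) k y) + Rabs (Derive_n (K1F w) k y) + Rabs (Derive_n (K0F w) k y) <= C * E w y).
  { intro k. destruct (BK2 k) as [a Ha]; destruct (BK1 k) as [b Hb]; destruct (BK0 k) as [c Hc].
    exists (a + b + c). intros w y Dw. specialize (Ha w y Dw). specialize (Hb w y Dw). specialize (Hc w y Dw).
    rewrite !Rmult_plus_distr_r. lra. }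
  exists (fun k => proj1_sig (constructive_indefinite_description _ (KB k))).
  intros w Dw'. assert (Dw : D w) by exact Dw'.
  exists (K2F w), (K1F w), (K0F w).
  split. apply SK2; auto. split. apply SK1; auto. split. apply SK0; auto. split.
  - intros f Hf y.
    assert (SPw : smooth (PP w)) by (apply SP; auto). assert (Sgw := Sg w Dw).
    assert (Wnz : forall t, W2 w t <> 0) by (intro t; apply Rgt_not_eq, W2pos; auto).
    assert (Hc : forall z, cf w (PP w) (g w) z = 0).
    { intro z. assert (I := ident w (PP w) (g w) (W2 w) SPw Sgw (SW2 w Dw) z).
      assert (L1 : Uo (g w) (MPg w (PP w) (MMg w (PP w) (W2 w))) z = 0).
      { assert (M1 : MMg w (PP w) (W2 w) = fun t => (1 - alpha w ^ 2) * W1 w t).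
        { apply functional_extensionality; intro t. exact (Heig2 w t (Dw1 w Dw)). }
        rewrite M1.
        assert (M2 : MPg w (PP w) (fun t => (1 - alpha w ^ 2) * W1 w t) =
                     fun t => (1 - alpha w ^ 2) * ((1 - alpha w ^ 2) * W2 w t)).
        { apply functional_extensionality; intro t. rewrite <- (Heig1 w t (Dw1 w Dw)).
          unfold MPg, Mp_op, PP. rewrite Derive_n_scal_l. ring. }
        rewrite M2. unfold Uo, g. rewrite !Derive_scal. field. apply Wnz. }
      assert (L2 : Kop (K2f w (PP w) (g w)) (K1f w (PP w) (g w)) (K0f w (PP w) (g w)) (Uo (g w) (W2 w)) z = 0).
      { assert (M : Uo (g w) (W2 w) = fun _ => 0).
        { apply functional_extensionality; intro t. unfold Uo, g. field. apply Wnz. }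
        rewrite M. unfold Kop. rewrite (Derive_n_const 3), (Derive_n_const 1), Derive_const. ring. }
      rewrite L1, L2 in I. assert (P0 := W2pos w z Dw).
      assert (HH : cf w (PP w) (g w) z * W2 w z = 0) by lra.
      destruct (Rmult_integral _ _ HH) as [H|H]; auto. lra. }
    assert (I := ident w (PP w) (g w) f SPw Sgw Hf y). rewrite Hc in I.
    rewrite Rmult_0_l in I. apply Rminus_diag_uniq in I. exact I.
  - intros k y. destruct (constructive_indefinite_description _ (KB k)) as [C HC]. simpl.
    eapply Rle_trans. apply HC; auto. unfold E, kap. cbv beta. replace (alpha w * (alpha w * 1)) with (alpha w ^ 2) by ring. right; ring.
Qed.
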